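(* Let $\delta\in(0,1/2)$, let $V$ be a finite set of $[-1,1]$-valued trees of depth $n$, let $\mathbf{p}$ be a $[\delta,1-\delta]$-valued tree of depth $n$, and let $c>0$. Then $$\mathbb{E}_y\max_{\mathbf{v}\in V}\Big[\sum_{t=1}^n\eta(\mathbf{p}_t(y),y_t)\mathbf{v}_t(y)-c\,\mathbf{v}_t(y)^2\Big]\le\frac{\log|V|}{\delta\log(1+\frac c2)},$$ where $y_t\mid y_1,\dots,y_{t-1}\sim\mathrm{Bernoulli}(\mathbf{p}_t(y_1,\dots,y_{t-1}))$. Furthermore, the same upper bound holds if $\mathbf{p}$ is any $[0,1]$-valued tree but the summation is restricted to $\{t:\mathbf{p}_t(y)\in[\delta,1-\delta]\}$.
   Context: A $\mathcal{Z}$-valued tree $\mathbf{z}$ of depth $n$ is a sequence of maps $\mathbf{z}_t:\{0,1\}^{t-1}\to\mathcal{Z}$, $t=1,\dots,n$; for $y\in\{0,1\}^n$, $\mathbf{z}_t(y)=\mathbf{z}_t(y_1,\dots,y_{t-1})$. $\eta(p,a)=-\mathbf{1}\{a=1\}p^{-1}+\mathbf{1}\{a=0\}(1-p)^{-1}$. Bernoulli$(p)$ means the $\{0,1\}$-valued variable equal to $1$ with probability $p$. *)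

(* Defs.v *)
From mathcomp Require Import all_boot all_order all_algebra.
From mathcomp Require Import all_classical all_reals all_analysis.
Set Implicit Arguments. Unset Strict Implicit. Unset Printing Implicit Defensive.
Import Order.TTheory GRing.Theory Num.Theory.
Local Open Scope ring_scope.

(* A real-valued binary tree: [z t s] is the value of the (t+1)-th map
   z_{t+1} at the prefix s = (y_1,...,y_t) in {0,1}^t (true = 1, false = 0).
   Only arguments with size s = t (t < n) are relevant for depth n. *)
Definition tree (R : Type) := nat -> seq bool -> R.

Definition tree_at {R : Type} (z : tree R) (t : nat) (y : seq bool) : R :=
  z t (take t y).

Definition tree_in {R : realType} (n : nat) (a b : R) (z : tree R) : Prop :=
  forall (t : nat) (s : seq bool), (t < n)%N -> size s = t -> a <= z t s <= b.

Definition etaf {R : realType} (p : R) (a : bool) : R :=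
  if a then - p^-1 else (1 - p)^-1.

Definition path_prob {R : realType} (n : nat) (p : tree R) (y : n.-tuple bool) : R :=
  \prod_(t < n) (if tnth y t then tree_at p t y else 1 - tree_at p t y).

Definition Ey {R : realType} (n : nat) (p : tree R) (F : n.-tuple bool -> R) : R :=
  \sum_(y : n.-tuple bool) path_prob p y * F y.

Definition fmax {R : realType} (I : finType) (i0 : I) (F : I -> R) : R :=
  \big[Num.max/F i0]_(i : I) F i.

(* Main.v *)
Require Import Defs.
From mathcomp Require Import all_boot all_order all_algebra.
From mathcomp Require Import all_classical all_reals all_analysis.
From mathcomp Require Import ring lra.
Import Order.TTheory GRing.Theory Num.Theory.
Local Open Scope classical_set_scope.
Local Open Scope ring_scope.

Section Aux.
Variable R : realType.


Lemma aux_alg (x L s Sx SL : R) : Sx <= SL * s ->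
  1 + (x + Sx) - (1 + (L + SL)) * s <= 1 + x - s * (1 + L).
Proof.
move=> H.
have -> : 1 + (x + Sx) - (1 + (L + SL)) * s = (1 + x - s*(1+L)) + (Sx - SL*s) by ring.
rewrite gerDl subr_le0. exact: H.
Qed.

Lemma ecE (x : R) n : exp_coeff x n = x ^+ n / n`!%:R.
Proof. by []. Qed.

Lemma expR_quad_aux (x L : R) : 0 < L -> `|x| <= L ->
  expR x - (x ^+ 2 / L ^+ 2) * expR L <= 1 + x - (x ^+ 2 / L ^+ 2) * (1 + L).
Proof.
move=> L0 xL.
set s := x ^+ 2 / L ^+ 2.
have cx := is_cvg_series_exp_coeff x.
have cL := is_cvg_series_exp_coeff L.
have h := cvgB cx (cvgMl (b:=s) cL).
specialize (h _ _).
have E := cvg_lim _ h.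
rewrite -/(expR x) -/(expR L) in E.
rewrite mulrC -E //.
apply: limr_le; first exact: (cvgP _ h).
near=> k.
have k2 : (2 <= k)%N by near: k; exists 2%N.
rewrite (_ : forall (f g : nat -> R) n, (f - g) n = f n - g n) //.
rewrite -(subnK k2) /series /= addn2 !big_nat_recl // !ecE.
rewrite !expr0 !expr1 !fact0 ?fact1 !divr1.
set Sx := (\sum_(0 <= i < _) _).
set SL := (\sum_(0 <= i < _) _).
apply: aux_alg.
rewrite /Sx /SL big_distrl /=.
apply: ler_sum => i _.
rewrite mulrAC ler_pM2r ?invr_gt0 ?ltr0n ?fact_gt0 //.
have -> : L ^+ i.+2 * s = L ^+ i * x ^+ 2.
  rewrite /s !exprS; field.
  by rewrite gt_eqF.
rewrite -addn2 exprD.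
have H : x ^+ i <= L ^+ i.
  apply: (le_trans (ler_norm _)).
  rewrite normrX.
  by apply: lerXn2r; rewrite ?nnegrE ?normr_ge0 // ltW.
exact: (ler_wpM2r (sqr_ge0 x) H).
Unshelve. all: by end_near.
Qed.

Lemma expR_quad (x L : R) : 0 < L -> `|x| <= L ->
  L ^+ 2 * (expR x - 1 - x) <= x ^+ 2 * (expR L - 1 - L).
Proof.
move=> L0 xL.
have H := @expR_quad_aux x L L0 xL.
have L2 : 0 < L ^+ 2 by rewrite exprn_gt0.
set s := x ^+ 2 / L ^+ 2 in H.
have E : s * (expR L - 1 - L) = s * expR L - s * (1 + L) by ring.
have H' : expR x - 1 - x <= s * (expR L - 1 - L) by rewrite E; lra.
rewrite -(ler_pM2l L2) in H'.
apply: (le_trans H'); rewrite le_eqVlt; apply/orP; left; apply/eqP.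
rewrite /s; field; by rewrite gt_eqF.
Qed.


Lemma half_aux (d L K q v x e : R) : 0 < d -> d <= q -> 0 < L -> 0 <= K ->
  x * q = d * L * v -> L ^+ 2 * (e - 1 - x) <= x ^+ 2 * K ->
  q * (e - 1 - x) <= K * d * v ^+ 2.
Proof.
move=> d0 dq L0 K0 xq H.
have q0 : 0 < q by apply: lt_le_trans dq.
have H1 : q * (L ^+ 2 * (e - 1 - x)) <= q * (x ^+ 2 * K).
  by rewrite ler_pM2l.
have H2 : q * (x ^+ 2 * K) * q = (d * L * v) ^+ 2 * K.
  by rewrite -xq; ring.
have H3 : (d * L * v) ^+ 2 * K <= d * L ^+ 2 * v ^+ 2 * K * q.
  have -> : (d * L * v) ^+ 2 * K = d * L ^+ 2 * v ^+ 2 * K * d by ring.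
  have nn : 0 <= d * L ^+ 2 * v ^+ 2 * K.
    apply: mulr_ge0 K0; apply: mulr_ge0 (sqr_ge0 v); exact: mulr_ge0 (ltW d0) (sqr_ge0 L).
  exact: (ler_wpM2l nn dq).
have H4 : q * (x ^+ 2 * K) <= d * L ^+ 2 * v ^+ 2 * K.
  by rewrite -(ler_pM2r q0) H2.
have L2 : 0 < L ^+ 2 by rewrite exprn_gt0.
rewrite -(ler_pM2l L2).
apply: (le_trans _ (le_trans H4 _)).
  by rewrite mulrCA.
by rewrite le_eqVlt; apply/orP; left; apply/eqP; ring.
Qed.
Lemma branch (d L q v x : R) : 0 < d -> d <= q -> 0 < L ->
  `|v| <= 1 -> x * q = d * L * v -> 
  q * (expR x - 1 - x) <= (expR L - 1 - L) * d * v ^+ 2.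
Proof.
move=> d0 dq L0 v1 xq.
have q0 : 0 < q by apply: lt_le_trans dq.
have K0 : 0 <= expR L - 1 - L.
  by have := expR_ge1Dx L; lra.
apply: (@half_aux d L (expR L - 1 - L) q v x (expR x) d0 dq L0 K0 xq).
apply: expR_quad => //.
have : `|x| * q <= L * q.
  rewrite -(ger0_norm (ltW q0)) -normrM xq !normrM (ger0_norm (ltW d0)) (ger0_norm (ltW L0)).
  rewrite (ger0_norm (ltW q0)).
  have : d * L * `|v| <= d * L * 1.
    by apply: ler_wpM2l => //; rewrite mulr_ge0 // ltW.
  by rewrite mulr1 => H; apply: (le_trans H); rewrite mulrC ler_wpM2l // ltW.
by rewrite ler_pM2r.
Qed.

Lemma step_bound (d c p v : R) : 0 < d -> 0 < c -> d <= p -> p <= 1 - d -> `|v| <= 1 ->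
  p * expR (d * ln (1 + c / 2) * (etaf p true * v - c * v ^+ 2))
  + (1 - p) * expR (d * ln (1 + c / 2) * (etaf p false * v - c * v ^+ 2)) <= 1.
Proof.
move=> d0 c0 dp pd v1.
set a := 1 + c / 2.
set L := ln a.
have a1 : 1 < a by rewrite /a; lra.
have L0 : 0 < L by apply: ln_gt0.
have eL : expR L = a by rewrite /L lnK // posrE; lra.
have La : L <= c / 2.
  rewrite /L /a. have := @le_ln1Dx R (c/2). apply; lra.
have cL : c <= L * (2 + c).
  have ha : 0 < a^-1 by rewrite invr_gt0; lra.
  have h1 : ln a^-1 <= a^-1 - 1.
    have := @le_ln1Dx R (a^-1 - 1).
    rewrite (_ : 1 + (a^-1 - 1) = a^-1); last by ring.
    apply; lra.
  rewrite lnV ?posrE -/L in h1; last lra.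
  have h2 : a * a^-1 = 1 by rewrite mulfV //; apply/eqP => h; lra.
  have : a * (1 - a^-1) <= a * L by rewrite ler_pM2l; [lra|lra].
  rewrite mulrBr mulr1 h2 /a => h3.
  lra.
have p0 : 0 < p by apply: lt_le_trans dp.
have q0 : 0 < 1 - p by lra.
have dq : d <= 1 - p by lra.
set x1 := d * L * (etaf p true * v).
set x2 := d * L * (etaf p false * v).
have hx1 : x1 * p = d * L * (- v).
  rewrite /x1 /etaf; field; apply/eqP => h; lra.
have hx2 : x2 * (1 - p) = d * L * v.
  rewrite /x2 /etaf; field; apply/eqP => h; lra.
have B1 := @branch d L p (- v) x1 d0 dp L0 _ hx1.
have B2 := @branch d L (1 - p) v x2 d0 dq L0 v1 hx2.
rewrite normrN in B1; have {}B1 := B1 v1.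
rewrite sqrrN eL in B1; rewrite eL in B2.
set e1 := expR x1 in B1; set e2 := expR x2 in B2.
have S1 : p * e1 + (1 - p) * e2 <= 1 + 2 * ((a - 1 - L) * d * v ^+ 2).
  have E : p * x1 + (1 - p) * x2 = 0.
    by rewrite [p * x1]mulrC [(1 - p) * x2]mulrC hx1 hx2; ring.
  move: B1 B2 E; set K := (a - 1 - L) * d * v ^+ 2 => B1 B2 E.
  have : p * (e1 - 1 - x1) + (1 - p) * (e2 - 1 - x2) <= 2 * K by lra.
  have -> : p * (e1 - 1 - x1) + (1 - p) * (e2 - 1 - x2) =
     p * e1 + (1 - p) * e2 - 1 - (p * x1 + (1 - p) * x2) by ring.
  rewrite E; lra.
set z := d * L * c * v ^+ 2.
have S2 : 2 * ((a - 1 - L) * d * v ^+ 2) <= z.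
  have dv : 0 <= d * v ^+ 2 by rewrite mulr_ge0 ?sqr_ge0 // ltW.
  have -> : 2 * ((a - 1 - L) * d * v ^+ 2) = (c - 2 * L) * (d * v ^+ 2) by rewrite /a; field.
  have -> : z = (L * c) * (d * v ^+ 2) by rewrite /z; ring.
  by apply: ler_wpM2r => //; lra.
have Ez : 1 + z <= expR z := expR_ge1Dx z.
have F : forall b, d * L * (etaf p b * v - c * v ^+ 2) = d * L * (etaf p b * v) - z.
  by move=> b; rewrite /z; ring.
rewrite !F !expRB -/x1 -/x2 -/e1 -/e2.
have ez0 : 0 < expR z := expR_gt0 z.
rewrite !mulrA -mulrDl ler_pdivrMr // mul1r.
lra.
Qed.


Definition hprod n (h : nat -> seq bool -> bool -> R) (y : n.-tuple bool) : R :=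
  \prod_(t < n) h t (take t y) (tnth y t).

Arguments hprod {n} h y.

Lemma sum_tuple0 (F : 0.-tuple bool -> R) : \sum_(y : 0.-tuple bool) F y = F [tuple].
Proof.
rewrite (eq_bigr (fun=> F [tuple])); last by move=> y _; rewrite (tuple0 y).
by rewrite sumr_const card_tuple expn0 mulr1n.
Qed.

Lemma sum_cons n (F : n.+1.-tuple bool -> R) :
  \sum_(y : n.+1.-tuple bool) F y = \sum_(b : bool) \sum_(y : n.-tuple bool) F [tuple of b :: y].
Proof.
rewrite pair_big /=.
pose h (q : bool * n.-tuple bool) : n.+1.-tuple bool := [tuple of q.1 :: q.2].
pose g (y : n.+1.-tuple bool) : bool * n.-tuple bool := (thead y, [tuple of behead y]).
rewrite (reindex h) /=; last first.
  exists g => [[b y] _|y _]; rewrite /g /h /=.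
    by congr pair; apply: val_inj.
  by rewrite [RHS]tuple_eta; apply: val_inj.
by apply: eq_bigr => -[b y].
Qed.

Lemma hprod_cons n h b (y : n.-tuple bool) :
  hprod h [tuple of b :: y] = h 0%N [::] b * hprod (fun t s b' => h t.+1 (b :: s) b') y.
Proof.
rewrite /hprod big_ord_recl /=.
congr (_ * _).
apply: eq_bigr => t _.
by rewrite !(tnth_nth b) /= add0n.
Qed.

Lemma mart_le n (h : nat -> seq bool -> bool -> R) :
  (forall t s, (t < n)%N -> size s = t ->
     [/\ 0 <= h t s true, 0 <= h t s false & h t s true + h t s false <= 1]) ->
  0 <= \sum_(y : n.-tuple bool) hprod h y <= 1.
Proof.
elim: n h => [|n IH] h H.
  by rewrite sum_tuple0 /hprod big_ord0 ler01 lexx.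
rewrite sum_cons.
have IHb b : 0 <= \sum_(y : n.-tuple bool) hprod (fun t s b' => h t.+1 (b :: s) b') y <= 1.
  by apply: IH => t s tn st; apply: H => //=; rewrite st.
have [h1 h2 h3] := H 0%N [::] isT erefl.
rewrite big_bool /=.
under eq_bigr do rewrite hprod_cons.
under [X in _ + X]eq_bigr do rewrite hprod_cons.
rewrite -!mulr_sumr.
have /andP[a1 a2] := IHb true.
have /andP[b1 b2] := IHb false.
set A := \sum_(i : n.-tuple bool) _.
set B := \sum_(i : n.-tuple bool) _.
have e1 : h 0%N [::] true * A <= h 0%N [::] true.
  by rewrite -[leRHS]mulr1; exact: (ler_wpM2l h1 a2).
have e2 : h 0%N [::] false * B <= h 0%N [::] false.
  by rewrite -[leRHS]mulr1; exact: (ler_wpM2l h2 b2).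
apply/andP; split; last by lra.
by rewrite addr_ge0 // mulr_ge0.
Qed.

Lemma mart_eq n (h : nat -> seq bool -> bool -> R) :
  (forall t s, (t < n)%N -> size s = t -> h t s true + h t s false = 1) ->
  \sum_(y : n.-tuple bool) hprod h y = 1.
Proof.
elim: n h => [|n IH] h H.
  by rewrite sum_tuple0 /hprod big_ord0.
rewrite sum_cons big_bool /=.
under eq_bigr do rewrite hprod_cons.
under [X in _ + X]eq_bigr do rewrite hprod_cons.
rewrite -!mulr_sumr !IH ?mulr1 ?(H 0%N [::]) // => t s tn st; by apply: H => //=; rewrite st.
Qed.



Lemma jensen_exp (T : finType) (w F : T -> R) (l : R) :
  (forall y, 0 <= w y) -> \sum_y w y = 1 ->
  expR (l * \sum_y (w y * F y)) <= \sum_y w y * expR (l * F y).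
Proof.
move=> w0 w1.
set m := \sum_y (w y * F y).
set e := expR (l * m).
have H y : w y * (e * (1 + l * (F y - m))) <= w y * expR (l * F y).
  apply: ler_wpM2l => //.
  have -> : l * F y = l * m + l * (F y - m) by ring.
  rewrite expRD; apply: ler_wpM2l; first exact: expR_ge0.
  exact: expR_ge1Dx.
apply: le_trans (ler_sum _ (fun y _ => H y)).
have -> : \sum_y w y * (e * (1 + l * (F y - m))) =
   \sum_y (e * w y + (e * l) * (w y * F y) - (e * l * m) * w y).
  by apply: eq_bigr => y _; ring.
rewrite sumrB big_split /= -!mulr_sumr w1 -/m.
have -> : e * 1 + e * l * m - e * l * m * 1 = e by ring.
by [].
Qed.

Lemma fmax_exp (I : finType) (i0 : I) (X : I -> R) (l : R) :
  expR (l * fmax i0 X) <= \sum_i expR (l * X i).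
Proof.
rewrite /fmax.
have T i : expR (l * X i) <= \sum_i expR (l * X i).
  rewrite (bigD1 i) //= lerDl.
  by apply: sumr_ge0 => j _; exact: expR_ge0.
apply: (big_ind (fun x => expR (l * x) <= \sum_i expR (l * X i))) => //.
move=> x y hx hy.
by rewrite /Num.max; case: (x < y).
Qed.
End Aux.
Arguments hprod {R n} h y.

(* V is the finite nonempty set {v i | i : I}, v injective, so |V| = #|I|. *)
Theorem lemma1 (R : realType) (delta c : R) (n : nat)
  (I : finType) (i0 : I) (v : I -> tree R) :
  0 < delta -> delta < 1 / 2 -> 0 < c ->
  (forall i j, (forall (t : nat) (s : seq bool), (t < n)%N -> size s = t ->
      v i t s = v j t s) -> i = j) ->
  (forall i, tree_in n (-1) 1 (v i)) ->
  (forall p : tree R, tree_in n delta (1 - delta) p ->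
     Ey p (fun y : n.-tuple bool =>
       fmax i0 (fun i => \sum_(t < n)
         (etaf (tree_at p t y) (tnth y t) * tree_at (v i) t y - c * (tree_at (v i) t y) ^+ 2)))
     <= ln (#|I|%:R) / (delta * ln (1 + c / 2)))
  /\
  (forall p : tree R, tree_in n 0 1 p ->
     Ey p (fun y : n.-tuple bool =>
       fmax i0 (fun i => \sum_(t < n | (delta <= tree_at p t y <= 1 - delta))
         (etaf (tree_at p t y) (tnth y t) * tree_at (v i) t y - c * (tree_at (v i) t y) ^+ 2)))
     <= ln (#|I|%:R) / (delta * ln (1 + c / 2))).
Proof.
move=> d0 d12 c0 _ vin.
set L := ln (1 + c / 2).
have L0 : 0 < L by apply: ln_gt0; lra.
set l := delta * L.
have l0 : 0 < l by rewrite mulr_gt0.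
have P2 : forall p : tree R, tree_in n 0 1 p ->
     Ey p (fun y : n.-tuple bool =>
       fmax i0 (fun i => \sum_(t < n | (delta <= tree_at p t y <= 1 - delta))
         (etaf (tree_at p t y) (tnth y t) * tree_at (v i) t y - c * (tree_at (v i) t y) ^+ 2)))
     <= ln (#|I|%:R) / (delta * L).
  move=> p pin.
  set X := fun i (y : n.-tuple bool) => \sum_(t < n | (delta <= tree_at p t y <= 1 - delta))
         (etaf (tree_at p t y) (tnth y t) * tree_at (v i) t y - c * (tree_at (v i) t y) ^+ 2).
  have sz (y : n.-tuple bool) (t : 'I_n) : size (take t y) = t.
    by rewrite size_takel // size_tuple ltnW.
  have w0 (y : n.-tuple bool) : 0 <= path_prob p y.
    rewrite /path_prob; apply: prodr_ge0 => t _.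
    have /andP[h1 h2] := pin t (take t y) (ltn_ord t) (sz y t).
    by rewrite /tree_at; case: (tnth y t) => //; rewrite subr_ge0.
  have w1 : \sum_(y : n.-tuple bool) path_prob p y = 1.
    have := @mart_eq R n (fun t s b => if b then p t s else 1 - p t s).
    by apply => t s _ _ /=; ring.
  pose hi i t s (b : bool) := (if b then p t s else 1 - p t s) *
    (if (delta <= p t s <= 1 - delta) then
       expR (l * (etaf (p t s) b * v i t s - c * v i t s ^+ 2)) else 1).
  have K i : \sum_(y : n.-tuple bool) path_prob p y * expR (l * X i y) <= 1.
    have -> : \sum_(y : n.-tuple bool) path_prob p y * expR (l * X i y) = \sum_(y : n.-tuple bool) hprod (hi i) y.
      apply: eq_bigr => y _.
      rewrite /X mulr_sumr expR_sum big_mkcond /= /path_prob -big_split /=.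
      by apply: eq_bigr => t _.
    have := @mart_le R n (hi i).
    case/(_ _)/andP => //.
    move=> t s tn st.
    have /andP[p0 p1] := pin t s tn st.
    have /andP[v0 v1] := vin i t s tn st.
    have va : `|v i t s| <= 1 by rewrite ler_norml v0 v1.
    rewrite /hi /=.
    case: ifP => [/andP[dp pd]|_].
      split; try by rewrite mulr_ge0 // ?expR_ge0 // subr_ge0.
      exact: step_bound.
    by rewrite !mulr1; split; lra.
  have J := @jensen_exp _ _ (path_prob p) (fun y => fmax i0 (X ^~ y)) l w0 w1.
  have M : expR (l * Ey p (fun y => fmax i0 (X ^~ y))) <= #|I|%:R.
    apply: (le_trans J).
    apply: (@le_trans _ _ (\sum_y path_prob p y * \sum_i expR (l * X i y))).
      apply: ler_sum => y _; apply: ler_wpM2l => //.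
      exact: fmax_exp.
    under eq_bigr do rewrite mulr_sumr.
    rewrite exchange_big /=.
    apply: (@le_trans _ _ (\sum_(i : I) 1)).
      by apply: ler_sum => i _; exact: K.
    by rewrite sumr_const.
  have N0 : 0 < (#|I|%:R : R).
    by rewrite ltr0n; apply/card_gt0P; exists i0.
  rewrite ler_pdivlMr; last by rewrite mulr_gt0.
  rewrite mulrC -/l -[l * _]expRK.
  by rewrite ler_ln // posrE expR_gt0.
split; last exact: P2.
move=> p pin.
have pin' : tree_in n 0 1 p.
  move=> t s tn st; have /andP[h1 h2] := pin t s tn st.
  by apply/andP; split; lra.
apply: le_trans (P2 p pin').
rewrite le_eqVlt; apply/orP; left; apply/eqP.
rewrite /Ey; apply: eq_bigr => y _; congr (_ * _).
congr (fmax i0 _); apply/funext => i /=.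
apply: eq_bigl => t /=.
rewrite /tree_at pin //; last by rewrite size_takel // size_tuple ltnW.
Qed.
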